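(* Let $R$ be a binary relation on a set $A$. If $\mathbf{WN}(R)$, $\mathbf{UN}^{=}(R)$ and $\mathbf{RP}(R)$ hold, then there is no $R$-increasing sequence, i.e. for every $s:\mathbb{N}\to A$ it is not the case that $s(k)\to s(k+1)$ for all $k$. (Constructively.)
   Context: Work in constructive (intuitionistic) logic / Martin-Löf type theory without excluded middle or other axioms. Let $R$ be a binary relation on $A$; write $a\to b$ for $R\,a\,b$, $\to^*$ for its reflexive–transitive closure, $=_R$ for the equivalence relation generated by $R$, $\equiv$ for identity. $a\in\mathrm{NF}$ iff there is no $b$ with $a\to b$. $\mathbf{WN}(R)$: every $a$ has some $b\in\mathrm{NF}$ with $a\to^* b$. $\mathbf{UN}^{=}(R)$: for all $a,b\in\mathrm{NF}$, $a=_R b$ implies $a\equiv b$. A sequence $s:\mathbb{N}\to A$ is $R$-increasing if $s(k)\to s(k+1)$ for all $k$; it is bounded if there is $b$ with $s(i)\to^* b$ for all $i$. $\mathbf{RP}(R)$: for every bounded $R$-increasing sequence $s$ there is $i$ such that for all $x\in A$, $s(i)\to^* x$ implies $x\to^* s(i)$. *)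

(* Defs.v *)
From Stdlib Require Import Relations.

Section ARS.
Context {A : Type} (R : A -> A -> Prop).

Definition rstar : A -> A -> Prop := clos_refl_trans A R.
Definition conv : A -> A -> Prop := clos_refl_sym_trans A R.

Definition NF (a : A) : Prop := ~ (exists b, R a b).

Definition WN : Prop := forall a, exists b, NF b /\ rstar a b.

Definition UN_eq : Prop :=
  forall a b, NF a -> NF b -> conv a b -> a = b.

Definition increasing (s : nat -> A) : Prop := forall k, R (s k) (s (S k)).

Definition bounded (s : nat -> A) : Prop := exists b, forall i, rstar (s i) b.

Definition RP : Prop :=
  forall s : nat -> A, increasing s -> bounded s ->
    exists i, forall x, rstar (s i) x -> rstar x (s i).
End ARS.

(* Main.v *)
Require Import Defs.
From Stdlib Require Import Relations.

Lemma rt_conv (A : Type) (R : A -> A -> Prop) a b : rstar R a b -> conv R a b.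
Proof. unfold rstar, conv; induction 1; eauto using clos_refl_sym_trans. Qed.

Lemma nf_rt (A : Type) (R : A -> A -> Prop) a b : rstar R a b -> NF R a -> b = a.
Proof.
  unfold rstar; intro H; apply clos_rt_rt1n in H; destruct H; auto.
  intro N; exfalso; apply N; eauto.
Qed.

Theorem theorem1p2p3 (A : Type) (R : A -> A -> Prop) :
  WN R -> UN_eq R -> RP R ->
  forall s : nat -> A, ~ (forall k, R (s k) (s (S k))).
Proof.
  intros Hwn Hun Hrp s Hs.
  destruct (Hwn (s 0)) as [n [Nn Rn]].
  assert (C : forall i, conv R (s i) (s 0)).
  { induction i. apply rst_refl.
    eapply rst_trans; [apply rst_sym, rst_step, Hs | exact IHi]. }
  assert (B : forall i, rstar R (s i) n).
  { intro i. destruct (Hwn (s i)) as [m [Nm Rm]].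
    assert (m = n) as ->; [|exact Rm].
    apply Hun; auto.
    eapply rst_trans; [apply rst_sym, rt_conv, Rm|].
    eapply rst_trans; [apply C| apply rt_conv, Rn]. }
  destruct (Hrp s Hs (ex_intro _ n B)) as [i Hi].
  pose proof (nf_rt _ _ _ _ (Hi n (B i)) Nn) as E.
  apply Nn; rewrite <- E; eauto.
Qed.
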